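(* For every integer $n\ge 1$, $$\sum_{\pi\in \mathcal I^C_{2n}(321)}q^{\mathrm{des}(\pi)}=(1+q)^n.$$
   Context: A permutation $\pi\in\mathcal S_m$ is centrosymmetric if $\pi(i)+\pi(m+1-i)=m+1$ for all $i$. $\mathcal I^C_m(321)$ is the set of centrosymmetric involutions in $\mathcal S_m$ avoiding the pattern $321$. $\mathrm{des}(\pi)$ is the number of positions $i\in\{1,\dots,m-1\}$ with $\pi(i)>\pi(i+1)$. *)

(* Defs.v *)
(* Permutations of [m] = {1..m} are modelled as {perm 'I_m}
   (0-indexed values 0..m-1); all notions below are the 0-indexed translations. *)
From HB Require Import structures.
From mathcomp Require Import all_boot all_order all_algebra all_fingroup.
Set Implicit Arguments. Unset Strict Implicit. Unset Printing Implicit Defensive.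
Import GRing.Theory.

(* centrosymmetric: pi(i) + pi(m+1-i) = m+1 (1-indexed), i.e. pi(i) + pi(m-1-i) = m-1 *)
Definition centrosymmetric m (s : {perm 'I_m}) : bool :=
  [forall i : 'I_m, (s i : nat) + s (rev_ord i) == m.-1].

Definition involution m (s : {perm 'I_m}) : bool := (s * s == 1)%g.

Definition avoids321 m (s : {perm 'I_m}) : bool :=
  [forall i : 'I_m, forall j : 'I_m, forall k : 'I_m,
     ~~ [&& i < j, j < k, s j < s i & s k < s j]].

Definition IC321 m : {set {perm 'I_m}} :=
  [set s | [&& centrosymmetric s, involution s & avoids321 s]].

Definition des m (s : {perm 'I_m}) : nat :=
  #|[set i : 'I_m | [exists j : 'I_m, (j == i.+1 :> nat) && (s j < s i)]]|.

(* Main.v *)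
Require Import Defs.
From HB Require Import structures.
From mathcomp Require Import all_boot all_order all_algebra all_fingroup.
From mathcomp Require Import zify.
Import GRing.Theory.
Set Implicit Arguments. Unset Strict Implicit. Unset Printing Implicit Defensive.

Definition rk (P : nat -> bool) i := count P (iota 0 i).

Lemma rkS (P : nat -> bool) p : rk P p.+1 = rk P p + P p.
Proof. by rewrite /rk -addn1 iotaD count_cat /= addn0. Qed.

Lemma rk_mono (P : nat -> bool) p q : p <= q -> rk P p <= rk P q.
Proof. by move=> h; rewrite /rk -(subnK h) addnC iotaD count_cat leq_addr. Qed.

Lemma rk_strict (P : nat -> bool) a b : P a -> a < b -> rk P a < rk P b.
Proof.
move=> Pa ab; apply: leq_trans (rk_mono P ab); by rewrite rkS Pa addn1.
Qed.

Lemma rk_inj (P : nat -> bool) a b : P a -> P b -> rk P a = rk P b -> a = b.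
Proof.
move=> Pa Pb e; case: (ltngtP a b) => // h.
- by have := rk_strict Pa h; rewrite e ltnn.
- by have := rk_strict Pb h; rewrite e ltnn.
Qed.

Lemma rk_lt_rev (P : nat -> bool) a b : rk P a < rk P b -> a < b.
Proof. by move=> h; rewrite ltnNge; apply/negP => /(rk_mono P); rewrite leqNgt h. Qed.

Lemma rank_index (P : nat -> bool) m y : P y -> y < m ->
  index y (filter P (iota 0 m)) = rk P y.
Proof.
move=> Py ym.
have -> : m = y + (m - y.+1).+1 by lia.
rewrite iotaD filter_cat index_cat.
have -> : (y \in [seq x <- iota 0 y | P x]) = false.
  by rewrite mem_filter mem_iota add0n ltnn !andbF.
rewrite size_filter /= add0n Py /= eqxx addn0 //.
Qed.

Lemma nth_filter_rank (P : nat -> bool) m k : k < rk P m ->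
  let y := nth 0 (filter P (iota 0 m)) k in [/\ P y, y < m & rk P y = k].
Proof.
move=> km y.
have hs : k < size (filter P (iota 0 m)) by rewrite size_filter.
have : y \in filter P (iota 0 m) by apply: mem_nth.
rewrite mem_filter mem_iota add0n => /andP[Py ym]; split => //.
rewrite -(rank_index Py ym) index_uniq //.
by apply: filter_uniq; apply: iota_uniq.
Qed.

Section Construct.
Variables (m : nat) (O C : nat -> bool).
Hypothesis hdisj : forall i, ~~ (O i && C i).
Hypothesis htot : rk O m = rk C m.
Hypothesis hC : forall c, c < m -> C c -> rk C c < rk O c.
Hypothesis hF : forall x, x < m -> ~~ O x -> ~~ C x -> rk O x = rk C x.

Definition fn i := if O i then nth 0 (filter C (iota 0 m)) (rk O i)
  else if C i then nth 0 (filter O (iota 0 m)) (rk C i) else i.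

Lemma fnO i : i < m -> O i -> [/\ C (fn i), fn i < m & rk C (fn i) = rk O i].
Proof.
move=> im Oi; rewrite /fn Oi.
apply: nth_filter_rank; rewrite -htot; exact: rk_strict Oi im.
Qed.

Lemma fnC i : i < m -> C i -> [/\ O (fn i), fn i < m & rk O (fn i) = rk C i].
Proof.
move=> im Ci; have Oi : O i = false by have := hdisj i; rewrite Ci andbT => /negbTE.
rewrite /fn Oi Ci.
apply: nth_filter_rank; rewrite htot; exact: rk_strict Ci im.
Qed.

Lemma fnF i : ~~ O i -> ~~ C i -> fn i = i.
Proof. by rewrite /fn => /negbTE -> /negbTE ->. Qed.

Lemma fn_ltm i : i < m -> fn i < m.
Proof.
move=> im; case Oi: (O i); first by case: (fnO im Oi).
case Ci: (C i); first by case: (fnC im Ci).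
by rewrite fnF ?Oi ?Ci.
Qed.

Lemma fn_gt i : i < m -> O i -> i < fn i.
Proof.
move=> im Oi; case: (fnO im Oi) => Cc cm rc.
case: (ltngtP i (fn i)) => // h.
- have := hC cm Cc; rewrite rc => h2.
  have := rk_mono O (ltnW h); lia.
- by move: Cc; rewrite -h => Ci; have := hdisj i; rewrite Oi Ci.
Qed.

Lemma fn_inv i : i < m -> fn (fn i) = i.
Proof.
move=> im; case Oi: (O i).
  case: (fnO im Oi) => Cc cm rc; case: (fnC cm Cc) => Oo om ro.
  apply: rk_inj Oo Oi _; by rewrite ro rc.
case Ci: (C i).
  case: (fnC im Ci) => Oc cm rc; case: (fnO cm Oc) => Co om ro.
  apply: rk_inj Co Ci _; by rewrite ro rc.
by rewrite !fnF ?Oi ?Ci.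
Qed.

Lemma fn_lt i : i < m -> C i -> fn i < i.
Proof.
move=> im Ci; case: (fnC im Ci) => Oo om _.
by have := fn_gt om Oo; rewrite fn_inv.
Qed.

Lemma fn_monoO a b : b < m -> O a -> O b -> a < b -> fn a < fn b.
Proof.
move=> bm Oa Ob ab; have am : a < m by lia.
case: (fnO am Oa) => Ca _ ra; case: (fnO bm Ob) => Cb _ rb.
apply: (@rk_lt_rev C); rewrite ra rb; exact: rk_strict Oa ab.
Qed.

Lemma fn_monoC a b : b < m -> C a -> C b -> a < b -> fn a < fn b.
Proof.
move=> bm Ca Cb ab; have am : a < m by lia.
case: (fnC am Ca) => Oa _ ra; case: (fnC bm Cb) => Ob _ rb.
apply: (@rk_lt_rev O); rewrite ra rb; exact: rk_strict Ca ab.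
Qed.

Lemma fn_arc o x : o < m -> x < m -> O o -> ~~ O x -> ~~ C x ->
  o < x -> x < fn o -> False.
Proof.
move=> om xm Oo Ox Cx ox xf.
case: (fnO om Oo) => Cc cm rc.
have h1 := rk_strict Oo ox.
have h2 := rk_mono C (ltnW xf).
have := hF xm Ox Cx; lia.
Qed.

Lemma fn_arcC c x : c < m -> x < m -> C c -> ~~ O x -> ~~ C x ->
  fn c < x -> x < c -> False.
Proof.
move=> cm xm Cc Ox Cx h1 h2.
case: (fnC cm Cc) => Oo om _.
apply: (@fn_arc (fn c) x) => //; by rewrite fn_inv.
Qed.

Lemma fn_cases i : i < m ->
  [\/ O i /\ i < fn i, C i /\ fn i < i | [/\ ~~ O i, ~~ C i & fn i = i]].
Proof.
move=> im; case Oi: (O i); first by constructor 1; split => //; exact: fn_gt.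
case Ci: (C i); first by constructor 2; split => //; exact: fn_lt.
by constructor 3; rewrite ?fnF ?Oi ?Ci.
Qed.

Lemma fn_no321 a b c : c < m -> a < b -> b < c -> fn b < fn a -> fn c < fn b -> False.
Proof.
move=> cm ab bc ba cb.
have bm : b < m by lia. have am : a < m by lia.
case: (fn_cases am) => [[Oa ha]|[Ca ha]|[Oa Ca ha]];
case: (fn_cases bm) => [[Ob hb]|[Cb hb]|[Ob Cb hb]];
case: (fn_cases cm) => [[Oc hc]|[Cc hc]|[Oc Cc hc]];
try lia;
try (by have := fn_monoO bm Oa Ob ab; lia);
try (by have := fn_monoC bm Ca Cb ab; lia);
try (by have := fn_monoO cm Ob Oc bc; lia);
try (by have := fn_monoC cm Cb Cc bc; lia);
try (by apply: (@fn_arc a b) => //; lia);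
try (by apply: (@fn_arc b c) => //; lia);
try (by apply: (@fn_arcC b a) => //; lia);
idtac.
Qed.

Definition fo (i : 'I_m) : 'I_m := insubd i (fn i).

Lemma fo_val i : val (fo i) = fn i.
Proof. by rewrite val_insubd fn_ltm. Qed.

Lemma fo_inv : involutive fo.
Proof. move=> i; apply: val_inj; by rewrite !fo_val fn_inv. Qed.

Lemma construct : exists s : {perm 'I_m},
  [/\ forall i, s (s i) = i, avoids321 s &
      forall i : 'I_m, (i < s i) = O i /\ (s i < i) = C i].
Proof.
exists (perm (inv_inj fo_inv)); split.
- by move=> i; rewrite !permE fo_inv.
- apply/forallP => i; apply/forallP => j; apply/forallP => k; apply/negP.
  rewrite !permE !fo_val => /and4P[ij jk ji kj].
  by apply: (@fn_no321 i j k).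
- move=> i; rewrite permE fo_val.
  case: (fn_cases (ltn_ord i)) => [[Oi h]|[Ci h]|[Oi Ci h]].
  + have Ci : C i = false by have := hdisj i; rewrite Oi => /negbTE.
    by rewrite Oi Ci h; split => //; apply/negbTE; rewrite -leqNgt ltnW.
  + have Oi : O i = false by have := hdisj i; rewrite Ci andbT => /negbTE.
    by rewrite Oi Ci h; split => //; apply/negbTE; rewrite -leqNgt ltnW.
  + by rewrite h ltnn (negbTE Oi) (negbTE Ci).
Qed.

End Construct.

Section Perms.
Variable m : nat.
Implicit Types s t : {perm 'I_m}.

Definition On s (i : nat) := [exists x : 'I_m, (x == i :> nat) && (x < s x)].
Definition Cn s (i : nat) := [exists x : 'I_m, (x == i :> nat) && (s x < x)].

Lemma On_ord s (x : 'I_m) : On s x = (x < s x).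
Proof.
apply/existsP/idP => [[y /andP[/eqP e h]]|h]; last by exists x; rewrite eqxx.
by have <- : y = x by apply: val_inj.
Qed.

Lemma Cn_ord s (x : 'I_m) : Cn s x = (s x < x).
Proof.
apply/existsP/idP => [[y /andP[/eqP e h]]|h]; last by exists x; rewrite eqxx.
by have <- : y = x by apply: val_inj.
Qed.

Lemma On_ge s i : m <= i -> On s i = false.
Proof. move=> h; apply/existsP => [[y /andP[/eqP e _]]]; have := ltn_ord y; lia. Qed.

Lemma Cn_ge s i : m <= i -> Cn s i = false.
Proof. move=> h; apply/existsP => [[y /andP[/eqP e _]]]; have := ltn_ord y; lia. Qed.

Lemma no321 s (a b c : 'I_m) : avoids321 s -> a < b -> b < c -> s b < s a -> s c < s b -> False.
Proof.
move=> /forallP /(_ a) /forallP /(_ b) /forallP /(_ c) h ab bc ba cb.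
by move: h; rewrite ab bc ba cb.
Qed.

Lemma bridge (P : nat -> bool) p : p <= m ->
  #|[set x : 'I_m | P x && (x < p)]| = rk P p.
Proof.
move=> pm; rewrite -sum1dep_card.
rewrite -(big_mkord (fun i => P i && (i < p)) (fun _ => 1)) /index_iota subn0 sum1_count.
rewrite /rk -(subnK pm) addnC iotaD count_cat.
rewrite (eq_in_count (a1 := fun i => P i && (i < p)) (a2 := P)); last first.
  by move=> x; rewrite mem_iota => /andP[_ h]; rewrite h andbT.
rewrite (eq_in_count (a1 := fun i => P i && (i < p)) (a2 := pred0)); last first.
  by move=> x; rewrite mem_iota => /andP[h _] /=; rewrite add0n in h; rewrite ltnNge h andbF.
by rewrite count_pred0 addn0.
Qed.

Section OneP.
Variable s : {perm 'I_m}.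
Hypothesis inv : forall i, s (s i) = i.
Hypothesis av : avoids321 s.

Lemma T1 (a b : 'I_m) : a < s a -> b < s b -> a < b -> s a < s b.
Proof.
move=> ha hb ab; case: (ltngtP (s a) (s b)) => // h.
- exfalso; apply: (@no321 s a b (s b)) => //; by rewrite inv.
- by move/val_inj: h => /perm_inj e; move: ab; rewrite e ltnn.
Qed.

Lemma T2 (a b : 'I_m) : s a < a -> s b < b -> a < b -> s a < s b.
Proof.
move=> ha hb ab; case: (ltngtP (s a) (s b)) => // h.
- exfalso; apply: (@no321 s (s b) (s a) a) => //; by rewrite ?inv //; lia.
- by move/val_inj: h => /perm_inj e; move: ab; rewrite e ltnn.
Qed.

Lemma Tarc (o x : 'I_m) : o < x -> x < s o -> s x = x -> False.
Proof. move=> h1 h2 h3; apply: (@no321 s o x (s o)) => //; rewrite ?inv ?h3 //. Qed.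

Lemma rank_lem (o : 'I_m) : o < s o -> rk (Cn s) (s o) = rk (On s) o.
Proof.
move=> ho; rewrite -!bridge ?(ltnW (ltn_ord _)) //.
suff -> : [set x : 'I_m | Cn s x && (x < s o)] = s @: [set x : 'I_m | On s x && (x < o)].
  by rewrite card_imset //; exact: perm_inj.
apply/setP => y; rewrite !inE Cn_ord; apply/idP/imsetP.
- case/andP => hy1 hy2; exists (s y); last by rewrite inv.
  rewrite inE On_ord inv hy1 /=.
  case: (ltngtP (s y) o) => // h.
  + by have := T1 ho _ h; rewrite inv ?hy1 // => /(_ isT); lia.
  + by move/val_inj: h => h; move: hy2; rewrite -h inv ltnn.
- case => x; rewrite inE On_ord => /andP[hx1 hx2] ->; rewrite inv hx1 /=.
  exact: T1.
Qed.
End OneP.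
End Perms.

Section Perms2.
Variable m : nat.

Section OneP2.
Variable s : {perm 'I_m}.
Hypothesis inv : forall i, s (s i) = i.
Hypothesis av : avoids321 s.

Lemma fixed_lem (x : 'I_m) : s x = x -> rk (On s) x = rk (Cn s) x.
Proof.
move=> hx; rewrite -!(@bridge m) ?(ltnW (ltn_ord _)) //.
suff -> : [set y : 'I_m | Cn s y && (y < x)] = s @: [set y : 'I_m | On s y && (y < x)].
  by rewrite card_imset //; exact: perm_inj.
apply/setP => y; rewrite !inE Cn_ord; apply/idP/imsetP.
- case/andP => hy1 hy2; exists (s y); last by rewrite inv.
  by rewrite inE On_ord inv hy1 /=; lia.
- case => z; rewrite inE On_ord => /andP[hz1 hz2] ->; rewrite inv hz1 /=.
  case: (ltngtP (s z) x) => // h.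
  + by exfalso; apply: (Tarc inv av hz2 h hx).
  + move/val_inj: h => h; have e : z = x by rewrite -(inv z) h hx.
    by move: hz2; rewrite e ltnn.
Qed.

Lemma closer_lem (c : 'I_m) : s c < c -> rk (Cn s) c < rk (On s) c.
Proof.
move=> hc; have ho : s c < s (s c) by rewrite inv.
have := rank_lem inv av ho; rewrite inv => ->.
apply: (rk_strict _ hc); by rewrite On_ord inv.
Qed.

Lemma word_lem (i : 'I_m) : Cn s i = ~~ On s i && (rk (Cn s) i < rk (On s) i).
Proof.
rewrite On_ord Cn_ord; case: (ltngtP i (s i)) => h /=.
- by [].
- by rewrite (closer_lem h).
- have e : s i = i by apply: val_inj.
  by rewrite (fixed_lem e) ltnn.
Qed.
End OneP2.

Lemma perm_eq_word (s t : {perm 'I_m}) :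
  (forall i, s (s i) = i) -> avoids321 s ->
  (forall i, t (t i) = i) -> avoids321 t ->
  (forall i, i < m -> On s i = On t i /\ Cn s i = Cn t i) -> s = t.
Proof.
move=> invs avs invt avt hw.
have eO : On s =1 On t.
  move=> i; case: (ltnP i m) => h; first by case: (hw i h).
  by rewrite !On_ge.
have eC : Cn s =1 Cn t.
  move=> i; case: (ltnP i m) => h; first by case: (hw i h).
  by rewrite !Cn_ge.
have rO p : rk (On s) p = rk (On t) p by apply: eq_count.
have rC p : rk (Cn s) p = rk (Cn t) p by apply: eq_count.
have opn (o : 'I_m) : o < s o -> s o = t o.
  move=> ho; have ht : o < t o by rewrite -On_ord -eO On_ord.
  apply: val_inj; apply: (@rk_inj (Cn s)).
  - by rewrite Cn_ord invs.
  - by rewrite eC Cn_ord invt.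
  - by rewrite (rank_lem invs avs ho) rC (rank_lem invt avt ht) rO.
apply/permP => i; case: (ltngtP i (s i)) => h.
- exact: opn.
- have ho : s i < s (s i) by rewrite invs.
  have := opn _ ho; rewrite invs => e.
  by rewrite [in RHS]e invt.
- have hs : Cn s i = false by rewrite Cn_ord -h ltnn.
  have hs' : On s i = false by rewrite On_ord -h ltnn.
  move: hs hs'; rewrite eC eO Cn_ord On_ord => h1 h2.
  have e1 : t i = i by apply: val_inj; apply/eqP; rewrite eqn_leq leqNgt h2 leqNgt h1.
  have e2 : s i = i by apply: val_inj; exact: (esym h).
  by rewrite e1 e2.
Qed.
End Perms2.

Fixpoint hgt (u : nat -> bool) i :=
  if i is j.+1 then (if u j then (hgt u j).+1 else (hgt u j).-1) else 0.
Definition Cf (u : nat -> bool) i := ~~ u i && (0 < hgt u i).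
Definition Ou n (u : nat -> bool) i := if i < n then u i else Cf u (2 * n - 1 - i).
Definition Cu n (u : nat -> bool) i := if i < n then Cf u i else u (2 * n - 1 - i).

Lemma Ou_lo n u i : i < n -> Ou n u i = u i. Proof. by rewrite /Ou => ->. Qed.
Lemma Ou_hi n u i : n <= i -> Ou n u i = Cf u (2 * n - 1 - i).
Proof. by rewrite /Ou ltnNge => ->. Qed.
Lemma Cu_lo n u i : i < n -> Cu n u i = Cf u i. Proof. by rewrite /Cu => ->. Qed.
Lemma Cu_hi n u i : n <= i -> Cu n u i = u (2 * n - 1 - i).
Proof. by rewrite /Cu ltnNge => ->. Qed.

Lemma hgtS u i : hgt u i.+1 = if u i then (hgt u i).+1 else (hgt u i).-1.
Proof. by []. Qed.

Lemma height n u i : i <= n -> rk (Ou n u) i = rk (Cu n u) i + hgt u i.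
Proof.
elim: i => [|i IH] hi; first by rewrite /rk.
have hi' : i < n by [].
rewrite !rkS IH ?(ltnW hi') // Ou_lo // Cu_lo // /Cf hgtS.
case: (u i) => /=; first lia.
case: (hgt u i) => [|h] /=; lia.
Qed.

Lemma second n u k : k <= n ->
  rk (Ou n u) (n + k) + rk (Cu n u) (n - k) = rk (Ou n u) n + rk (Cu n u) n /\
  rk (Cu n u) (n + k) + rk (Ou n u) (n - k) = rk (Ou n u) n + rk (Cu n u) n.
Proof.
elim: k => [|k IH] hk; first by rewrite addn0 subn0; split; lia.
have [IH1 IH2] := IH (ltnW hk).
have e : n - k = (n - k.+1).+1 by lia.
rewrite e !rkS in IH1 IH2.
rewrite addnS !rkS Ou_hi ?leq_addr // Cu_hi ?leq_addr //.
have e2 : 2 * n - 1 - (n + k) = n - k.+1 by lia.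
rewrite e2 in IH1 IH2 *.
have e3 : Cu n u (n - k.+1) = Cf u (n - k.+1) by rewrite Cu_lo //; lia.
have e4 : Ou n u (n - k.+1) = u (n - k.+1) by rewrite Ou_lo //; lia.
rewrite e3 e4 in IH1 IH2; split; lia.
Qed.

Section Hyps.
Variables (n : nat) (u : nat -> bool).
Hypothesis hn : 0 < n.

Lemma hdisj_u i : ~~ (Ou n u i && Cu n u i).
Proof. rewrite /Ou /Cu /Cf; case: (i < n) => /=; [by case: (u i) | by rewrite andbC andbA andbN]. Qed.

Lemma htot_u : rk (Ou n u) (2 * n) = rk (Cu n u) (2 * n).
Proof.
have [h1 h2] := second u (leqnn n).
have e0 : forall P, rk P 0 = 0 by [].
rewrite subnn !e0 in h1 h2.
have -> : 2 * n = n + n by lia.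
lia.
Qed.

Lemma hC_u c : c < 2 * n -> Cu n u c -> rk (Cu n u) c < rk (Ou n u) c.
Proof.
move=> cm; case: (ltnP c n) => hc.
  rewrite (Cu_lo _ hc) /Cf => /andP[_ hh]; rewrite height //; [lia | exact: ltnW].
rewrite (Cu_hi _ hc); set j := 2 * n - 1 - c => uj.
have hk : c - n <= n by lia.
have [h1 h2] := second u hk.
have e1 : n + (c - n) = c by lia.
have e2 : n - (c - n) = j.+1 by rewrite /j; lia.
rewrite e1 e2 in h1 h2.
have hj : j.+1 <= n by rewrite /j; lia.
have := height u hj.
rewrite hgtS uj; lia.
Qed.

Lemma hF_u x : x < 2 * n -> ~~ Ou n u x -> ~~ Cu n u x -> rk (Ou n u) x = rk (Cu n u) x.
Proof.
move=> xm; case: (ltnP x n) => hx.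
  rewrite (Ou_lo _ hx) (Cu_lo _ hx) /Cf => /negbTE ux; rewrite ux /= => hh.
  rewrite height ?(ltnW hx) //; lia.
rewrite (Ou_hi _ hx) (Cu_hi _ hx); set j := 2 * n - 1 - x => Cj uj.
have hk : x - n <= n by lia.
have [h1 h2] := second u hk.
have e1 : n + (x - n) = x by lia.
have e2 : n - (x - n) = j.+1 by rewrite /j; lia.
rewrite e1 e2 in h1 h2.
have hj : j.+1 <= n by rewrite /j; lia.
have := height u hj.
move: Cj; rewrite /Cf hgtS (negbTE uj) /= => hh.
have -> : hgt u j = 0 by lia.
lia.
Qed.

Lemma mirror_u i : i < 2 * n ->
  Ou n u (2 * n - 1 - i) = Cu n u i /\ Cu n u (2 * n - 1 - i) = Ou n u i.
Proof.
move=> im; case: (ltnP i n) => hi.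
  have h2 : n <= 2 * n - 1 - i by lia.
  rewrite (Ou_hi _ h2) (Cu_hi _ h2) (Ou_lo _ hi) (Cu_lo _ hi).
  by have -> : 2 * n - 1 - (2 * n - 1 - i) = i by lia.
have h2 : 2 * n - 1 - i < n by lia.
by rewrite (Ou_lo _ h2) (Cu_lo _ h2) (Ou_hi _ hi) (Cu_hi _ hi).
Qed.
End Hyps.

Lemma hgt_ext (u v : nat -> bool) n : (forall i, i < n -> u i = v i) ->
  forall i, i <= n -> hgt u i = hgt v i.
Proof.
move=> h; elim=> [|i IH] hi //=.
by rewrite IH ?(ltnW hi) // h.
Qed.

Lemma OCu_ext n (u v : nat -> bool) : (forall i, i < n -> u i = v i) ->
  forall i, i < 2 * n -> Ou n u i = Ou n v i /\ Cu n u i = Cu n v i.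
Proof.
move=> h i im; rewrite /Ou /Cu /Cf.
case: (ltnP i n) => hi.
  by rewrite h // (hgt_ext h) // ltnW.
by rewrite !h ?(hgt_ext h); lia.
Qed.

Section Main.
Variable n : nat.
Hypothesis hn : 0 < n.
Local Notation m := (2 * n).

Lemma IC_inv (s : {perm 'I_m}) : s \in IC321 m -> forall i, s (s i) = i.
Proof.
rewrite inE => /and3P[_ /eqP hi _] i.
by have := congr1 (fun p : {perm 'I_m} => p i) hi; rewrite /= permM perm1.
Qed.

Lemma IC_av (s : {perm 'I_m}) : s \in IC321 m -> avoids321 s.
Proof. by rewrite inE => /and3P[]. Qed.

Lemma IC_mirror (s : {perm 'I_m}) : s \in IC321 m -> forall i, i < m ->
  On s (m - 1 - i) = Cn s i /\ Cn s (m - 1 - i) = On s i.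
Proof.
rewrite inE => /and3P[/forallP hc _ _] i im.
set x := Ordinal im.
have e : m - 1 - i = rev_ord x by rewrite /=; lia.
have := hc x; move/eqP => hx.
have b1 := ltn_ord (s x); have b2 := ltn_ord (s (rev_ord x)).
rewrite e On_ord Cn_ord.
have -> : i = x by [].
rewrite Cn_ord On_ord /=.
move: hx b1 b2; rewrite /= => hx b1 b2.
split; apply/idP/idP; lia.
Qed.

Lemma det (s : {perm 'I_m}) : s \in IC321 m -> forall i, i < m ->
  On s i = Ou n (On s) i /\ Cn s i = Cu n (On s) i.
Proof.
move=> hs.
have inv := IC_inv hs; have av := IC_av hs.
have first : forall i, i <= n -> forall j, j < i -> Cn s j = Cf (On s) j.
  elim=> [|i IH] hi j ji; first by [].
  have hin : i < n by [].
  case: (ltngtP j i) => hj; first by apply: IH => //; exact: ltnW.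
  - lia.
  rewrite hj.
  have im : i < m by lia.
  have := word_lem inv av (Ordinal im); rewrite /= => ->.
  have eO : rk (On s) i = rk (Ou n (On s)) i.
    apply: eq_in_count => k; rewrite mem_iota add0n => /andP[_ hk].
    by rewrite Ou_lo //; lia.
  have eC : rk (Cn s) i = rk (Cu n (On s)) i.
    apply: eq_in_count => k; rewrite mem_iota add0n => /andP[_ hk].
    rewrite Cu_lo; last by lia.
    by apply: IH => //; exact: ltnW.
  rewrite eO eC height ?(ltnW hin) // /Cf.
  congr (_ && _); apply/idP/idP; lia.
move=> i im; case: (ltnP i n) => hi.
  by rewrite (Ou_lo _ hi) (Cu_lo _ hi) (first n (leqnn n) i hi).
have hj : m - 1 - i < n by lia.
rewrite (Ou_hi _ hi) (Cu_hi _ hi) -(first n (leqnn n) _ hj).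
have := IC_mirror hs (ltac:(lia) : m - 1 - i < m).
have -> : m - 1 - (m - 1 - i) = i by lia.
by case => -> ->.
Qed.
End Main.

Section Desc.
Variable m : nat.
Variable s : {perm 'I_m}.
Hypothesis inv : forall i, s (s i) = i.
Hypothesis av : avoids321 s.

Lemma desc_char (i j : 'I_m) : nat_of_ord j = i.+1 -> (s j < s i) = (i < s i) && (s j < j).
Proof.
move=> ej; apply/idP/idP => [h|]; last first.
  by case/andP => h1 h2; lia.
case: (ltngtP i (s i)) => hi; case: (ltngtP j (s j)) => hj /=; try lia.
- by have := T1 inv av hi hj (ltac:(lia)); lia.
- exfalso; apply: (Tarc inv av (o := i) (x := j)); try lia.
  exact: val_inj.
- by have := T2 inv av hi hj (ltac:(lia)); lia.
- exfalso; apply: (Tarc inv av (o := s j) (x := i)); rewrite ?inv; try lia.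
  exact: val_inj.
Qed.

Lemma des_peaks : 0 < m -> des s = rk (fun i => On s i && Cn s i.+1) (m - 1).
Proof.
move=> m0; rewrite /des -(@bridge m _ (m - 1)) ?leq_subr //.
apply: eq_card => i; rewrite !inE.
apply/existsP/idP.
- case=> j /andP[/eqP ej hj]; move: hj; rewrite (desc_char ej) => /andP[h1 h2].
  rewrite On_ord h1 -ej Cn_ord h2 /=; have := ltn_ord j; lia.
- case/andP => [/andP[h1 h2] h3].
  have jm : i.+1 < m by lia.
  exists (Ordinal jm); rewrite eqxx /= (desc_char (j := Ordinal jm)) //.
  by rewrite -On_ord h1 /= -(Cn_ord s (Ordinal jm)).
Qed.
End Desc.

Definition dd (u : nat -> bool) i := ((0 < i) && u i.-1) (+) u i.
Definition T10 (u : nat -> bool) i := u i && ~~ u i.+1.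

Lemma dd_count u N : rk (dd u) N.+1 = 2 * rk (T10 u) N + u N.
Proof.
elim: N => [|N IH]; first by rewrite /rk /= /dd /=; case: (u 0).
rewrite rkS IH rkS /dd /T10 /=.
by case: (u N); case: (u N.+1) => /=; lia.
Qed.

Lemma rev_count (P : nat -> bool) N : count (fun k => P (N - 1 - k)) (iota 0 N) = rk P N.
Proof.
elim: N => [|N IH]; first by [].
rewrite rkS -IH.
have -> : iota 0 N.+1 = 0 :: iota (1 + 0) N by [].
rewrite iotaDl /= count_map subn0 subn1 /= addnC; congr (_ + _).
by apply: eq_count => k /=; congr P; lia.
Qed.

Lemma rk_split (P : nat -> bool) a b : rk P (a + b) = rk P a + count (fun k => P (a + k)) (iota 0 b).
Proof.
rewrite /rk iotaD count_cat add0n; congr (_ + _).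
by rewrite -[in LHS](addn0 a) iotaDl count_map.
Qed.

Lemma CfT10 u j : Cf u j.+1 && u j = T10 u j.
Proof. rewrite /Cf /T10 hgtS. by case: (u j); case: (u j.+1); rewrite /= ?andbF ?andbT. Qed.

Lemma peaks_u n (u : nat -> bool) : 0 < n ->
  rk (fun i => Ou n u i && Cu n u i.+1) (2 * n - 1) = 2 * rk (T10 u) (n - 1) + u (n - 1).
Proof.
move=> hn.
have -> : 2 * n - 1 = (n - 1 + 1) + (n - 1) by lia.
rewrite rk_split rk_split.
have e1 : rk (fun i => Ou n u i && Cu n u i.+1) (n - 1) = rk (T10 u) (n - 1).
  apply: eq_in_count => k; rewrite mem_iota add0n => /andP[_ hk] /=.
  have h1 : k < n by lia. have h2 : k.+1 < n by lia.
  rewrite (Ou_lo _ h1) (Cu_lo _ h2) /Cf /T10 hgtS.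
  by case: (u k) => //=; rewrite andbT.
have e2 : count (fun k => Ou n u (n - 1 + k) && Cu n u (n - 1 + k).+1) (iota 0 1) = u (n - 1).
  rewrite /= !addn0.
  have h1 : n - 1 < n by lia. have h2 : n <= (n - 1).+1 by lia.
  rewrite (Ou_lo _ h1) (Cu_hi _ h2).
  have -> : 2 * n - 1 - (n - 1).+1 = n - 1 by lia.
  by case: (u (n - 1)).
have e3 : count (fun k => Ou n u (n - 1 + 1 + k) && Cu n u (n - 1 + 1 + k).+1) (iota 0 (n - 1))
        = count (fun k => T10 u (n - 1 - 1 - k)) (iota 0 (n - 1)).
  apply: eq_in_count => k; rewrite mem_iota add0n => /andP[_ hk] /=.
  have h1 : n <= n - 1 + 1 + k by lia. have h2 : n <= (n - 1 + 1 + k).+1 by lia.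
  rewrite (Ou_hi _ h1) (Cu_hi _ h2).
  have -> : 2 * n - 1 - (n - 1 + 1 + k) = (n - 1 - 1 - k).+1 by lia.
  have -> : 2 * n - 1 - (n - 1 + 1 + k).+1 = n - 1 - 1 - k by lia.
  exact: CfT10.
rewrite e1 e2 e3 rev_count; lia.
Qed.

Lemma sum_count_nat (a : nat -> bool) r : \sum_(i <- r) (a i : nat) = count a r.
Proof. elim: r => [|x r IH]; by rewrite ?big_nil ?big_cons ?IH. Qed.

Fixpoint pre (D : nat -> bool) i := if i is j.+1 then pre D j (+) D j.+1 else D 0.

Section Final.
Variable n : nat.
Hypothesis hn : 0 < n.
Local Notation m := (2 * n).

Definition Phi (s : {perm 'I_m}) : {ffun 'I_n -> bool} := [ffun i : 'I_n => dd (On s) i].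

Lemma des_Phi (s : {perm 'I_m}) : s \in IC321 m -> des s = \sum_(i < n) (Phi s i : nat).
Proof.
move=> hs.
have -> : \sum_(i < n) (Phi s i : nat) = rk (dd (On s)) n.
  under eq_bigr do rewrite ffunE.
  by rewrite -(big_mkord xpredT (fun i => (dd (On s) i : nat))) /index_iota subn0 sum_count_nat.
rewrite (des_peaks (IC_inv hs) (IC_av hs)); last by lia.
have -> : rk (fun i => On s i && Cn s i.+1) (m - 1) =
          rk (fun i => Ou n (On s) i && Cu n (On s) i.+1) (m - 1).
  apply: eq_in_count => k; rewrite mem_iota add0n => /andP[_ hk].
  have [a _] := det hn hs (ltac:(lia) : k < m).
  have [_ b] := det hn hs (ltac:(lia) : k.+1 < m).
  by rewrite a b.
rewrite peaks_u // -dd_count.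
by have -> : (n - 1).+1 = n by lia.
Qed.

Lemma Phi_On (s t : {perm 'I_m}) : Phi s = Phi t -> forall i, i < n -> On s i = On t i.
Proof.
move=> E.
have hd : forall i, i < n -> dd (On s) i = dd (On t) i.
  move=> i hi; have := congr1 (fun f : {ffun 'I_n -> bool} => f (Ordinal hi)) E.
  by rewrite /= !ffunE.
elim=> [|i IH] hi; first by have := hd 0 hi; rewrite /dd.
have := hd i.+1 hi; rewrite /dd /= IH ?(ltnW hi) //.
by case: (On t i); case: (On s i.+1); case: (On t i.+1).
Qed.

Lemma Phi_inj : {in IC321 m &, injective Phi}.
Proof.
move=> s t hs ht E.
apply: (perm_eq_word (IC_inv hs) (IC_av hs) (IC_inv ht) (IC_av ht)).
move=> i im.
have [a b] := det hn hs im; have [c d] := det hn ht im.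
have [e f] := OCu_ext (Phi_On E) im.
by rewrite a b c d e f.
Qed.

Lemma Phi_surj (d : {ffun 'I_n -> bool}) : exists2 s, s \in IC321 m & Phi s = d.
Proof.
pose dn i := [exists j : 'I_n, (val j == i) && d j].
have dnE (j : 'I_n) : dn j = d j.
  apply/existsP/idP => [[k /andP[/eqP e h]]|h]; last by exists j; rewrite eqxx.
  by have <- : k = j by apply: val_inj.
pose u := pre dn.
have [s [inv av ty]] := construct (@hdisj_u n u) (htot_u u hn) (@hC_u n u hn) (@hF_u n u hn).
have OnS : forall i, i < m -> On s i = Ou n u i /\ Cn s i = Cu n u i.
  move=> i im; have [a b] := ty (Ordinal im).
  by rewrite (On_ord s (Ordinal im)) (Cn_ord s (Ordinal im)) a b.
have tinj : injective (fun i : 'I_m => rev_ord (s (rev_ord i))).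
  by move=> x y /rev_ord_inj /perm_inj /rev_ord_inj.
pose t := perm tinj.
have tE i : t i = rev_ord (s (rev_ord i)) by rewrite permE.
have tinv : forall i, t (t i) = i.
  by move=> i; rewrite !tE rev_ordK inv rev_ordK.
have tav : avoids321 t.
  apply/forallP => i; apply/forallP => j; apply/forallP => k; apply/negP.
  rewrite !tE /= => /and4P[ij jk ji kj].
  apply: (@no321 _ s (rev_ord k) (rev_ord j) (rev_ord i) av); rewrite /=;
  have := ltn_ord (s (rev_ord i)); have := ltn_ord (s (rev_ord j));
  have := ltn_ord (s (rev_ord k)); have := ltn_ord k; lia.
have ts : t = s.
  apply: (perm_eq_word tinv tav inv av) => i im.
  set x := Ordinal im.
  have e : m - 1 - i = rev_ord x by rewrite /=; lia.
  have [a b] := OnS _ (ltn_ord (rev_ord x)).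
  have [c f] := OnS _ im.
  have [g h] := mirror_u u hn im.
  have b1 := ltn_ord (s (rev_ord x)).
  rewrite -e in a b.
  rewrite (On_ord t x) (Cn_ord t x) c f -g -h -a -b tE.
  rewrite e (On_ord s (rev_ord x)) (Cn_ord s (rev_ord x)) /=.
  by split; apply/idP/idP; lia.
have cen : forall i : 'I_m, (s i : nat) + s (rev_ord i) = m.-1.
  move=> i; have := congr1 (fun p : {perm 'I_m} => val (p i)) ts.
  rewrite /= tE /= => <-.
  have := ltn_ord (s (rev_ord i)); lia.
exists s.
  rewrite inE; apply/and3P; split => //.
  - by apply/forallP => i; rewrite cen.
  - by apply/eqP/permP => i; rewrite permM perm1 inv.
apply/ffunP => i; rewrite ffunE.
have hu : forall j, j < n -> On s j = u j.
  by move=> j jn; have [a _] := OnS j (ltac:(lia)); rewrite a Ou_lo.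
rewrite -dnE /dd; case: i => [[|k] hk] /=.
  by rewrite hu.
rewrite !hu; try lia.
by rewrite /u /= addKb.
Qed.

Lemma Phi_onto : Phi @: IC321 m = setT.
Proof.
apply/setP => d; rewrite inE; apply/imsetP.
by have [s hs <-] := Phi_surj d; exists s.
Qed.
End Final.

Local Open Scope ring_scope.

Theorem mainTheorem3 (n : nat) (hn : (1 <= n)%N) :
  \sum_(s in IC321 (2 * n)) ('X ^+ des s : {poly int}) = (1 + 'X) ^+ n.
Proof.
have -> : \sum_(s in IC321 (2 * n)) ('X ^+ des s : {poly int}) =
          \sum_(s in IC321 (2 * n)) \prod_(i < n) ('X ^+ (Phi s i : nat) : {poly int}).
  apply: eq_bigr => s hs; rewrite (des_Phi hn hs) -prodrXr //.
rewrite -(big_imset (fun d : {ffun 'I_n -> bool} => \prod_(i < n) ('X ^+ (d i : nat) : {poly int})) (@Phi_inj n hn)).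
rewrite Phi_onto //.
rewrite (eq_bigl xpredT); last by move=> d; rewrite inE.
rewrite -(bigA_distr_bigA (fun (i : 'I_n) (b : bool) => ('X ^+ (b : nat) : {poly int}))).
under eq_bigr do rewrite big_bool /= expr1 expr0.
by rewrite prodr_const card_ord addrC.
Qed.
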